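(* Let $(M,g,J)$ be a Kaehler manifold, $p\in M$, and let $\{v,w\}$ and $\{x,y\}$ be orthonormal pairs in $T_pM$, $\pi=\mathrm{span}\{v,w\}$. For $\varepsilon\in\mathbb{R}$ set $A=x\wedge_gy+Jx\wedge_gJy$, $v_\varepsilon=v+\varepsilon Av$, $w_\varepsilon=w+\varepsilon Aw$ and $\pi_\varepsilon=\mathrm{span}\{v_\varepsilon,w_\varepsilon\}$. Then, as $\varepsilon\to0$, $$K(p,\pi_\varepsilon)=K(p,\pi)+\varepsilon\,Q^c(g,R)(v,w,w,v;x,y)+O(\varepsilon^2).$$
   Context: A Kaehler manifold $(M,g,J)$: $J^2=-\mathrm{Id}$, $g(JX,JY)=g(X,Y)$, $\nabla J=0$. Curvature: $R(X,Y)Z=\nabla_X\nabla_YZ-\nabla_Y\nabla_XZ-\nabla_{[X,Y]}Z$, $R(X,Y,Z,W)=g(R(X,Y)Z,W)$; the sectional curvature of the plane spanned by linearly independent $a,b$ is $K(p,\mathrm{span}\{a,b\})=R(a,b,b,a)/(g(a,a)g(b,b)-g(a,b)^2)$. For vectors $X,Y$, $X\wedge_gY$ is the endomorphism $Z\mapsto g(Y,Z)X-g(X,Z)Y$, and $(X\wedge^c_gY)Z=(X\wedge_gY)Z+(JX\wedge_gJY)Z-2g(JX,Y)JZ$. For an endomorphism $B$, $(B\cdot R)(X_1,\dots,X_4)=-R(BX_1,X_2,X_3,X_4)-R(X_1,BX_2,X_3,X_4)-R(X_1,X_2,BX_3,X_4)-R(X_1,X_2,X_3,BX_4)$. The complex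 Tachibana tensor is $Q^c(g,R)(X_1,X_2,X_3,X_4;X,Y)=-((X\wedge^c_gY)\cdot R)(X_1,X_2,X_3,X_4)$. *)

(* Defs.v *)
(* Pointwise (algebraic) model of T_pM of a Kaehler manifold:
   T_pM = 'rV[R]_n with g_p the standard dot product (orthonormal frame),
   J_p a matrix acting on row vectors, R_p given by its components. *)
From mathcomp Require Import all_boot all_order all_algebra.
Set Implicit Arguments. Unset Strict Implicit. Unset Printing Implicit Defensive.
Import Order.TTheory GRing.Theory Num.Theory.
Local Open Scope ring_scope.

Section KaehlerPoint.
Variables (R : realFieldType) (n : nat).
Notation V := 'rV[R]_n.

Definition gmet (u v : V) : R := \sum_(i < n) u 0 i * v 0 i.

Definition Japp (J : 'M[R]_n) (u : V) : V := u *m J.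

Definition Rform (Rc : 'I_n -> 'I_n -> 'I_n -> 'I_n -> R) (X Y Z W : V) : R :=
  \sum_(i < n) \sum_(j < n) \sum_(k < n) \sum_(l < n)
     X 0 i * Y 0 j * Z 0 k * W 0 l * Rc i j k l.

Definition wedge (X Y : V) (Z : V) : V := gmet Y Z *: X - gmet X Z *: Y.

Definition wedgec (J : 'M[R]_n) (X Y : V) (Z : V) : V :=
  wedge X Y Z + wedge (Japp J X) (Japp J Y) Z - (2 * gmet (Japp J X) Y) *: Japp J Z.

Definition Bdot (B : V -> V) (Rf : V -> V -> V -> V -> R) (X1 X2 X3 X4 : V) : R :=
  - Rf (B X1) X2 X3 X4 - Rf X1 (B X2) X3 X4 - Rf X1 X2 (B X3) X4 - Rf X1 X2 X3 (B X4).

Definition Qc (J : 'M[R]_n) (Rf : V -> V -> V -> V -> R) (X1 X2 X3 X4 X Y : V) : R :=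
  - Bdot (wedgec J X Y) Rf X1 X2 X3 X4.

Definition sectK (Rf : V -> V -> V -> V -> R) (a b : V) : R :=
  Rf a b b a / (gmet a a * gmet b b - gmet a b ^+ 2).

Definition kaehler_point (J : 'M[R]_n) (Rc : 'I_n -> 'I_n -> 'I_n -> 'I_n -> R) : Prop :=
  (forall u, Japp J (Japp J u) = - u) /\
      (forall u v, gmet (Japp J u) (Japp J v) = gmet u v) /\
      (forall X Y Z W, Rform Rc X Y Z W = - Rform Rc Y X Z W) /\
      (forall X Y Z W, Rform Rc X Y Z W = - Rform Rc X Y W Z) /\
      (forall X Y Z W, Rform Rc X Y Z W = Rform Rc Z W X Y) /\
      (forall X Y Z W, Rform Rc X Y Z W + Rform Rc Y Z X W + Rform Rc Z X Y W = 0) /\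
     (forall X Y Z W, Rform Rc X Y (Japp J Z) (Japp J W) = Rform Rc X Y Z W).

End KaehlerPoint.

(* Main.v *)
Require Import Defs.
From mathcomp Require Import all_boot all_order all_algebra.
From mathcomp Require Import ring lra.
Import Order.TTheory GRing.Theory Num.Theory.
Local Open Scope ring_scope.
Set Implicit Arguments. Unset Strict Implicit.

Ltac bigsplit := rewrite -big_split /=; apply: eq_bigr => ? _.
Ltac bigscal := rewrite big_distrr /=; apply: eq_bigr => ? _.

Lemma Rform_D1 (R : realFieldType) n (Rc : 'I_n -> 'I_n -> 'I_n -> 'I_n -> R) X X' Y Z W :
  Rform Rc (X + X') Y Z W = Rform Rc X Y Z W + Rform Rc X' Y Z W.
Proof. rewrite /Rform; do 4 bigsplit; rewrite !mxE; ring. Qed.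
Lemma Rform_D2 (R : realFieldType) n (Rc : 'I_n -> 'I_n -> 'I_n -> 'I_n -> R) X X' Y Z W :
  Rform Rc Y (X + X') Z W = Rform Rc Y X Z W + Rform Rc Y X' Z W.
Proof. rewrite /Rform; do 4 bigsplit; rewrite !mxE; ring. Qed.
Lemma Rform_D3 (R : realFieldType) n (Rc : 'I_n -> 'I_n -> 'I_n -> 'I_n -> R) X X' Y Z W :
  Rform Rc Y Z (X + X') W = Rform Rc Y Z X W + Rform Rc Y Z X' W.
Proof. rewrite /Rform; do 4 bigsplit; rewrite !mxE; ring. Qed.
Lemma Rform_D4 (R : realFieldType) n (Rc : 'I_n -> 'I_n -> 'I_n -> 'I_n -> R) X X' Y Z W :
  Rform Rc Y Z W (X + X') = Rform Rc Y Z W X + Rform Rc Y Z W X'.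
Proof. rewrite /Rform; do 4 bigsplit; rewrite !mxE; ring. Qed.
Lemma Rform_Z1 (R : realFieldType) n (Rc : 'I_n -> 'I_n -> 'I_n -> 'I_n -> R) (a : R) X Y Z W :
  Rform Rc (a *: X) Y Z W = a * Rform Rc X Y Z W.
Proof. rewrite /Rform; do 4 bigscal; rewrite !mxE; ring. Qed.
Lemma Rform_Z2 (R : realFieldType) n (Rc : 'I_n -> 'I_n -> 'I_n -> 'I_n -> R) (a : R) X Y Z W :
  Rform Rc Y (a *: X) Z W = a * Rform Rc Y X Z W.
Proof. rewrite /Rform; do 4 bigscal; rewrite !mxE; ring. Qed.
Lemma Rform_Z3 (R : realFieldType) n (Rc : 'I_n -> 'I_n -> 'I_n -> 'I_n -> R) (a : R) X Y Z W :
  Rform Rc Y Z (a *: X) W = a * Rform Rc Y Z X W.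
Proof. rewrite /Rform; do 4 bigscal; rewrite !mxE; ring. Qed.
Lemma Rform_Z4 (R : realFieldType) n (Rc : 'I_n -> 'I_n -> 'I_n -> 'I_n -> R) (a : R) X Y Z W :
  Rform Rc Y Z W (a *: X) = a * Rform Rc Y Z W X.
Proof. rewrite /Rform; do 4 bigscal; rewrite !mxE; ring. Qed.
Lemma Rform_N1 (R : realFieldType) n (Rc : 'I_n -> 'I_n -> 'I_n -> 'I_n -> R) X Y Z W :
  Rform Rc (- X) Y Z W = - Rform Rc X Y Z W.
Proof. by rewrite -scaleN1r Rform_Z1 mulN1r. Qed.
Lemma Rform_N2 (R : realFieldType) n (Rc : 'I_n -> 'I_n -> 'I_n -> 'I_n -> R) X Y Z W :
  Rform Rc Y (- X) Z W = - Rform Rc Y X Z W.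
Proof. by rewrite -scaleN1r Rform_Z2 mulN1r. Qed.
Lemma Rform_N3 (R : realFieldType) n (Rc : 'I_n -> 'I_n -> 'I_n -> 'I_n -> R) X Y Z W :
  Rform Rc Y Z (- X) W = - Rform Rc Y Z X W.
Proof. by rewrite -scaleN1r Rform_Z3 mulN1r. Qed.
Lemma Rform_N4 (R : realFieldType) n (Rc : 'I_n -> 'I_n -> 'I_n -> 'I_n -> R) X Y Z W :
  Rform Rc Y Z W (- X) = - Rform Rc Y Z W X.
Proof. by rewrite -scaleN1r Rform_Z4 mulN1r. Qed.

Lemma gmetC (R : realFieldType) n (u v : 'rV[R]_n) : gmet u v = gmet v u.
Proof. rewrite /gmet; apply: eq_bigr => ? _; ring. Qed.
Lemma gmetDl (R : realFieldType) n (u u' v : 'rV[R]_n) : gmet (u + u') v = gmet u v + gmet u' v.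
Proof. rewrite /gmet; bigsplit; rewrite !mxE; ring. Qed.
Lemma gmetDr (R : realFieldType) n (u u' v : 'rV[R]_n) : gmet v (u + u') = gmet v u + gmet v u'.
Proof. rewrite /gmet; bigsplit; rewrite !mxE; ring. Qed.
Lemma gmetZl (R : realFieldType) n a (u v : 'rV[R]_n) : gmet (a *: u) v = a * gmet u v.
Proof. rewrite /gmet; bigscal; rewrite !mxE; ring. Qed.
Lemma gmetZr (R : realFieldType) n a (u v : 'rV[R]_n) : gmet v (a *: u) = a * gmet v u.
Proof. rewrite /gmet; bigscal; rewrite !mxE; ring. Qed.
Lemma gmetNl (R : realFieldType) n (u v : 'rV[R]_n) : gmet (- u) v = - gmet u v.
Proof. by rewrite -scaleN1r gmetZl mulN1r. Qed.
Lemma gmetNr (R : realFieldType) n (u v : 'rV[R]_n) : gmet v (- u) = - gmet v u.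
Proof. by rewrite -scaleN1r gmetZr mulN1r. Qed.

Lemma skewA (R : realFieldType) n (x y X Y u z : 'rV[R]_n) :
  gmet u (wedge x y z + wedge X Y z) = - gmet (wedge x y u + wedge X Y u) z.
Proof.
rewrite /wedge !(gmetDl, gmetDr, gmetNl, gmetNr, gmetZl, gmetZr).
rewrite (gmetC y u) (gmetC x u) (gmetC Y u) (gmetC X u); ring.
Qed.
Lemma nge (R : realFieldType) (x : R) : - `|x| <= x.
Proof. have := ler_norm (- x); rewrite normrN; lra. Qed.
Lemma poly3 (R : realFieldType) (e c0 c1 c2 c3 : R) : `|e| <= 1 ->
  `|c0 + e * c1 + e ^+ 2 * c2 + e ^+ 3 * c3| <= `|c0| + `|c1| + `|c2| + `|c3|.
Proof.
move=> he.
have n1 := ler_normD (c0 + e * c1 + e ^+ 2 * c2) (e ^+ 3 * c3).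
have n2 := ler_normD (c0 + e * c1) (e ^+ 2 * c2).
have n3 := ler_normD c0 (e * c1).
have b : forall k c, `|e ^+ k * c| <= `|c|.
  move=> k c; rewrite normrM normrX; apply: ler_piMl => //; exact: exprn_ile1.
have b1 := b 1%N c1; rewrite expr1 in b1.
have b2 := b 2%N c2; have b3 := b 3%N c3.
lra.
Qed.
Lemma gmet_ge0 (R : realFieldType) n (u : 'rV[R]_n) : 0 <= \sum_(i < n) u 0 i * u 0 i.
Proof. apply: sumr_ge0 => i _; rewrite -expr2; exact: sqr_ge0. Qed.
Unset Implicit Arguments.
Theorem mainTheorem6 (R : realFieldType) (n : nat) (J : 'M[R]_n)
    (Rc : 'I_n -> 'I_n -> 'I_n -> 'I_n -> R) (v w x y : 'rV[R]_n) :
  kaehler_point J Rc ->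
  gmet v v = 1 -> gmet w w = 1 -> gmet v w = 0 ->
  gmet x x = 1 -> gmet y y = 1 -> gmet x y = 0 ->
  let A := fun Z => wedge x y Z + wedge (Japp J x) (Japp J y) Z in
  exists C delta : R, 0 < delta /\
    forall eps : R, `|eps| < delta ->
      `| sectK (Rform Rc) (v + eps *: A v) (w + eps *: A w)
         - sectK (Rform Rc) v w
         - eps * Qc J (Rform Rc) v w w v x y | <= C * eps ^+ 2.
Proof.
move=> [HJJ [_ [_ [_ [HS [_ HJ]]]]]] hvv hww hvw _ _ _ A.
have sk : forall u z, gmet u (A z) = - gmet (A u) z by move=> u z; exact: skewA.
set a : 'rV[R]_n := A v; set b : 'rV[R]_n := A w.
have hBv : forall z, wedgec J x y z = A z - (2 * gmet (Japp J x) y) *: Japp J z by [].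
have ha : A v = a by []. have hb : A w = b by [].
clearbody a b.
have hva : gmet v a = 0.
  have h1 := sk v v; have h2 := gmetC a v; rewrite ha in h1; lra.
have hwb : gmet w b = 0.
  have h1 := sk w w; have h2 := gmetC b w; rewrite hb in h1; lra.
have hvb : gmet a w = - gmet v b by rewrite -ha -hb sk opprK.
set Rf := Rform Rc.
set d2 := gmet a a + gmet b b.
set d4 := gmet a a * gmet b b - gmet a b ^+ 2.
have hD : forall e, gmet (v + e *: a) (v + e *: a) * gmet (w + e *: b) (w + e *: b)
   - gmet (v + e *: a) (w + e *: b) ^+ 2 = 1 + e^+2 * d2 + e^+4 * d4.
  move=> e; rewrite !(gmetDl, gmetDr, gmetZl, gmetZr).
  rewrite (gmetC a v) (gmetC b w) hva hwb hvw hvv hww hvb /d2 /d4; ring.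
set N0 := Rf v w w v.
set N1 := Rf a w w v + Rf v b w v + Rf v w b v + Rf v w w a.
set N2 := Rf a b w v + Rf a w b v + Rf a w w a + Rf v b b v + Rf v b w a + Rf v w b a.
set N3 := Rf a b b v + Rf a b w a + Rf a w b a + Rf v b b a.
set N4 := Rf a b b a.
have hN : forall e, Rf (v + e *: a) (w + e *: b) (w + e *: b) (v + e *: a)
   = N0 + e * N1 + e^+2 * N2 + e^+3 * N3 + e^+4 * N4.
  move=> e; rewrite /Rf !(Rform_D1, Rform_D2, Rform_D3, Rform_D4, Rform_Z1, Rform_Z2, Rform_Z3, Rform_Z4).
  rewrite /N0 /N1 /N2 /N3 /N4 /Rf; ring.
have hQ : Qc J Rf v w w v x y = N1.
  rewrite /Qc /Bdot !hBv ha hb.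
  rewrite /Rf !(Rform_D1, Rform_D2, Rform_D3, Rform_D4, Rform_N1, Rform_N2, Rform_N3, Rform_N4, Rform_Z1, Rform_Z2, Rform_Z3, Rform_Z4).
  have e1 : Rform Rc v w w (Japp J v) = - Rform Rc v w (Japp J w) v.
    by rewrite -HJ HJJ Rform_N4.
  have e2 : Rform Rc (Japp J v) w w v = Rform Rc w v (Japp J v) w by rewrite HS.
  have e3 : Rform Rc v (Japp J w) w v = - Rform Rc w v (Japp J v) w.
    by rewrite HS -HJ HJJ Rform_N4.
  rewrite e1 e2 e3 /N1 /Rf; ring.
have hK0 : sectK Rf v w = N0.
  by rewrite /sectK hvv hww hvw expr0n /= mulr1 subr0 divr1.
have d2ge : 0 <= d2 by rewrite /d2; apply: addr_ge0; exact: gmet_ge0.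
pose q := `|d4|.
pose M := `|N2 - d2 * N0| + `|N3 - d2 * N1| + `|N4 - d4 * N0| + `|- d4 * N1|.
have M0 : 0 <= M by rewrite /M; repeat apply: addr_ge0; exact: normr_ge0.
have q0 : 0 <= q by exact: normr_ge0.
exists (2 * M), (1 / (2 * q + 2)); split.
  by apply: divr_gt0 => //; lra.
move=> e he.
pose t := `|e|.
have t0 : 0 <= t by exact: normr_ge0.
rewrite -/t ltr_pdivlMr in he; last by lra.
have t1 : t <= 1 by nra.
have e2 : e ^+ 2 = t ^+ 2 by rewrite -normrX ger0_norm // sqr_ge0.
have e4 : e ^+ 4 = t ^+ 4 by rewrite (_ : 4%N = (2 * 2)%N) // !exprM e2.
have t3 : t ^+ 3 <= 1 by exact: exprn_ile1.
have t4 : t ^+ 4 <= t by rewrite exprSr; nra.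
have t40 : 0 <= t ^+ 4 by exact: exprn_ge0.
have dq : - q <= d4 by exact: nge.
have Dge : 1 / 2 <= 1 + e ^+ 2 * d2 + e ^+ 4 * d4.
  have h1 : 0 <= e ^+ 2 * d2 by apply: mulr_ge0 => //; exact: sqr_ge0.
  rewrite e4; nra.
rewrite hK0 hQ /sectK hD hN.
have Dn0 : 1 + e ^+ 2 * d2 + e ^+ 4 * d4 != 0 by apply/eqP; lra.
set D := 1 + e ^+ 2 * d2 + e ^+ 4 * d4 in Dge Dn0 *.
set S := (N2 - d2 * N0) + e * (N3 - d2 * N1) + e ^+ 2 * (N4 - d4 * N0) + e ^+ 3 * (- d4 * N1).
have key : (N0 + e * N1 + e ^+ 2 * N2 + e ^+ 3 * N3 + e ^+ 4 * N4) / D - N0 - e * N1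
    = e ^+ 2 * S / D.
  rewrite /S /D; field; exact: Dn0.
rewrite key.
have hS : `|S| <= M by apply: poly3.
have D0 : 0 < D by lra.
have hSD : `|S| / D <= 2 * M by rewrite ler_pdivrMr //; nra.
rewrite -mulrA normrM (ger0_norm (sqr_ge0 e)) normrM (gtr0_norm (_ : 0 < D^-1)); last by rewrite invr_gt0.
rewrite mulrC; apply: ler_wpM2r; first exact: sqr_ge0.
done.
Qed.
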